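(* Let $\mathcal{X}$ and $\mathcal{W}$ be finite sets and $G\in\mathbb{R}^{|\mathcal{W}|\times|\mathcal{X}|}$ a matrix such that for every probability vector $q$ on $\mathcal{X}$, $\|Gq\|_1>0$ and $Gq/\|Gq\|_1$ is entrywise non-negative. Let $(\eta,F)$ be a generalised entropy. For jointly distributed random variables $X$ (values in $\mathcal{X}$, distribution $p$) and $Y$ (discrete), define $H_g(X)=\eta\big(\|Gp\|_1F(Gp/\|Gp\|_1)\big)$ and $H_g(X\mid Y)=\eta\Big(\sum_{y:\,p(y)>0}p(y)\|Gp_{X\mid y}\|_1F\big(Gp_{X\mid y}/\|Gp_{X\mid y}\|_1\big)\Big)$. Then $H_g(X)-H_g(X\mid Y)\geq 0$.
   Context: Generalised entropy: a pair $(\eta,F)$ where $F$ is a bounded real-valued function on probability vectors of every finite length that is symmetric (unchanged by permuting entries) and expansible (unchanged by appending zero entries), and $\eta$ is a real function, such that either $\eta$ is increasing and $F$ concave, or $\eta$ is decreasing and $F$ convex. $p_{X\mid y}=(p(x\mid y))_{x\in\mathcal{X}}$ is the posterior vector and $\|\cdot\|_1$ the $\ell_1$ norm. *)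

(* Defs.v *)
From HB Require Import structures.
From mathcomp Require Import all_boot all_order all_algebra.
From mathcomp Require Import all_classical all_reals all_analysis.
Set Implicit Arguments. Unset Strict Implicit. Unset Printing Implicit Defensive.
Import Order.TTheory GRing.Theory Num.Theory.
Import numFieldNormedType.Exports.
Local Open Scope ring_scope.

Section Defs.
Variable R : realType.

Definition is_prob (s : seq R) : Prop :=
  (forall x, x \in s -> 0 <= x) /\ \sum_(x <- s) x = 1.

Definition is_prob_vec n (q : 'cV[R]_n) : Prop :=
  (forall i, 0 <= q i 0) /\ \sum_i q i 0 = 1.

Definition l1 m (v : 'cV[R]_m) : R := \sum_i `|v i 0|.

Definition seqv m (v : 'cV[R]_m) : seq R := [seq v i 0 | i <- enum 'I_m].

Definition F_bounded (F : seq R -> R) : Prop :=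
  exists M : R, forall s, is_prob s -> `|F s| <= M.
Definition F_symmetric (F : seq R -> R) : Prop :=
  forall s t, is_prob s -> perm_eq s t -> F s = F t.
Definition F_expansible (F : seq R -> R) : Prop :=
  forall s, is_prob s -> F (rcons s 0) = F s.
Definition mix (a : R) (s t : seq R) : seq R :=
  [seq a * xy.1 + (1 - a) * xy.2 | xy <- zip s t].
Definition F_concave (F : seq R -> R) : Prop :=
  forall s t a, size s = size t -> is_prob s -> is_prob t -> 0 <= a <= 1 ->
    a * F s + (1 - a) * F t <= F (mix a s t).
Definition F_convex (F : seq R -> R) : Prop :=
  forall s t a, size s = size t -> is_prob s -> is_prob t -> 0 <= a <= 1 ->
    F (mix a s t) <= a * F s + (1 - a) * F t.

Definition gen_entropy (eta : R -> R) (F : seq R -> R) : Prop :=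
  [/\ F_bounded F, F_symmetric F, F_expansible F &
      ({homo eta : x y / x <= y} /\ F_concave F) \/
      ({homo eta : x y / y <= x >-> x <= y} /\ F_convex F)].

Definition gterm m n (G : 'M[R]_(m, n)) (F : seq R -> R) (q : 'cV[R]_n) : R :=
  l1 (G *m q) * F (seqv ((l1 (G *m q))^-1 *: (G *m q))).

(* joint pmf p x y of (X, Y), X in 'I_n, Y in nat (any discrete Y) *)
Definition margY n (p : 'I_n -> nat -> R) (y : nat) : R := \sum_x p x y.
Definition margX n (p : 'I_n -> nat -> R) : 'cV[R]_n :=
  \col_x (limn (series (p x))).
Definition condX n (p : 'I_n -> nat -> R) (y : nat) : 'cV[R]_n :=
  \col_x (p x y / margY p y).

Definition Hg m n (eta : R -> R) (F : seq R -> R) (G : 'M[R]_(m, n))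
  (p : 'I_n -> nat -> R) : R := eta (gterm G F (margX p)).

Definition Hg_cond m n (eta : R -> R) (F : seq R -> R) (G : 'M[R]_(m, n))
  (p : 'I_n -> nat -> R) : R :=
  eta (limn (series (fun y =>
         if 0 < margY p y then margY p y * gterm G F (condX p y) else 0))).

End Defs.

(* Main.v *)
Require Import Defs.
From HB Require Import structures.
From mathcomp Require Import all_boot all_order all_algebra.
From mathcomp Require Import all_classical all_reals all_analysis.
From mathcomp Require Import ring lra.
Import Order.TTheory GRing.Theory Num.Theory.
Import numFieldNormedType.Exports.
Local Open Scope classical_set_scope.
Local Open Scope ring_scope.
Set Implicit Arguments. Unset Strict Implicit. Unset Printing Implicit Defensive.

Lemma zip_map2 (A B C : Type) (f : A -> B) (g : A -> C) (s : seq A) :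
  zip (map f s) (map g s) = map (fun x => (f x, g x)) s.
Proof. by elim: s => //= x s ->. Qed.

Definition nnv (R : realType) n (u : 'cV[R]_n) := forall j, 0 <= u j 0.
Definition tot (R : realType) n (u : 'cV[R]_n) := \sum_j u j 0.

Lemma tot_ge0 (R : realType) n (u : 'cV[R]_n) : nnv u -> 0 <= tot u.
Proof. by move=> h; apply: sumr_ge0 => j _; exact: h. Qed.

Lemma tot0 (R : realType) n (u : 'cV[R]_n) : nnv u -> tot u = 0 -> u = 0.
Proof.
move=> h /psumr_eq0P H; apply/matrixP => i j; rewrite (ord1 j) mxE.
by apply: H => // k _; exact: h.
Qed.

Lemma l1_nn (R : realType) m (v : 'cV[R]_m) : (forall i, 0 <= v i 0) ->
  l1 v = \sum_i v i 0.
Proof. by move=> h; apply: eq_bigr => i _; rewrite ger0_norm. Qed.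

Lemma l1Z (R : realType) m (v : 'cV[R]_m) (c : R) : 0 <= c -> l1 (c *: v) = c * l1 v.
Proof.
move=> c0; rewrite /l1 mulr_sumr; apply: eq_bigr => i _.
by rewrite mxE normrM ger0_norm.
Qed.

Lemma l10 (R : realType) m : l1 (0 : 'cV[R]_m) = 0.
Proof. by rewrite /l1 big1 // => i _; rewrite mxE normr0. Qed.

Lemma gterm0 (R : realType) m n (G : 'M[R]_(m, n)) F : gterm G F 0 = 0.
Proof. by rewrite /gterm mulmx0 l10 mul0r. Qed.

Lemma gtermZ (R : realType) m n (G : 'M[R]_(m, n)) F (u : 'cV[R]_n) c :
  0 < c -> gterm G F (c *: u) = c * gterm G F u.
Proof.
move=> c0; have e : forall L : R, (c * L)^-1 * c = L^-1.
  by move=> L; rewrite invfM mulrAC mulVf ?gt_eqF ?mul1r.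
by rewrite /gterm -scalemxAr l1Z ?ltW // scalerA e mulrA.
Qed.

Lemma keyG (R : realType) m n (G : 'M[R]_(m, n)) :
  (forall q : 'cV[R]_n, is_prob_vec q ->
     0 < l1 (G *m q) /\ (forall i, 0 <= (G *m q) i 0 / l1 (G *m q))) ->
  forall u, nnv u -> 0 < tot u ->
  0 < l1 (G *m u) /\ forall i, 0 <= (G *m u) i 0.
Proof.
move=> HG u hu tu.
set q := (tot u)^-1 *: u.
have pq : is_prob_vec q.
  rewrite /is_prob_vec; split=> [i|].
    by rewrite mxE; apply: mulr_ge0; [rewrite invr_ge0; exact: tot_ge0 | exact: hu].
  under eq_bigr do rewrite mxE.
  by rewrite -mulr_sumr mulVf ?gt_eqF.
have -> : G *m u = tot u *: (G *m q).
  by rewrite /q -scalemxAr scalerA mulfV ?gt_eqF // scale1r.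
have [l0 e0] := HG q pq.
split; first by rewrite l1Z ?ltW //; apply: mulr_gt0.
move=> i; rewrite mxE; apply: mulr_ge0; first exact: ltW.
have -> : (G *m q) i 0 = (G *m q) i 0 / l1 (G *m q) * l1 (G *m q).
  by rewrite divfK ?gt_eqF.
by apply: mulr_ge0 => //; exact: ltW.
Qed.

Lemma prob_seqv (R : realType) m (v : 'cV[R]_m) : 0 < l1 v -> (forall i, 0 <= v i 0) ->
  is_prob (seqv ((l1 v)^-1 *: v)).
Proof.
move=> l0 h; split.
  move=> x /mapP [i _ ->]; rewrite mxE; apply: mulr_ge0 => //.
  by rewrite invr_ge0; exact: ltW.
rewrite /seqv big_map big_enum /=.
under eq_bigr do rewrite mxE.
by rewrite -mulr_sumr -l1_nn // mulVf ?gt_eqF.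
Qed.

Lemma superadd (R : realType) m n (G : 'M[R]_(m, n)) F :
  (forall q : 'cV[R]_n, is_prob_vec q ->
     0 < l1 (G *m q) /\ (forall i, 0 <= (G *m q) i 0 / l1 (G *m q))) ->
  F_concave F ->
  forall u v, nnv u -> nnv v -> gterm G F u + gterm G F v <= gterm G F (u + v).
Proof.
move=> HG Fc u v hu hv.
have [tu0|tu] := eqVneq (tot u) 0.
  by rewrite (tot0 hu tu0) gterm0 !add0r.
have [tv0|tv] := eqVneq (tot v) 0.
  by rewrite (tot0 hv tv0) gterm0 !addr0.
have tup : 0 < tot u by rewrite lt_neqAle eq_sym tu tot_ge0.
have tvp : 0 < tot v by rewrite lt_neqAle eq_sym tv tot_ge0.
have [Lu Gu] := keyG HG hu tup.
have [Lv Gv] := keyG HG hv tvp.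
rewrite /gterm mulmxDr.
move: Lu Gu Lv Gv; set a := G *m u; set b := G *m v => Lu Gu Lv Gv.
have eL : l1 (a + b) = l1 a + l1 b.
  rewrite (l1_nn Gu) (l1_nn Gv) l1_nn.
    by rewrite -big_split; apply: eq_bigr => i _; rewrite mxE.
  by move=> i; rewrite mxE addr_ge0.
rewrite eL.
move: Lu Lv; set La := l1 a; set Lb := l1 b => Lu Lv.
have Lp : 0 < La + Lb by rewrite addr_gt0.
set t := La / (La + Lb).
have ht : 0 <= t <= 1.
  apply/andP; split; first by rewrite divr_ge0 ?ltW.
  by rewrite ler_pdivrMr // mul1r lerDl ltW.
have Hc := Fc _ _ t (etrans (size_map _ _) (esym (size_map _ _)))
   (prob_seqv Lu Gu) (prob_seqv Lv Gv) ht.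
have Hmix : mix t (seqv (La^-1 *: a)) (seqv (Lb^-1 *: b)) =
            seqv ((La + Lb)^-1 *: (a + b)).
  rewrite /mix /seqv zip_map2 -map_comp; apply: eq_map => i /=.
  rewrite !mxE /t; field.
  by rewrite (gt_eqF Lu) (gt_eqF Lv) (gt_eqF Lp).
rewrite Hmix in Hc.
have -> : La * F (seqv (La^-1 *: a)) + Lb * F (seqv (Lb^-1 *: b)) =
  (La + Lb) * (t * F (seqv (La^-1 *: a)) + (1 - t) * F (seqv (Lb^-1 *: b))).
  rewrite /t; field.
  by rewrite (gt_eqF Lp).
by rewrite ler_pM2l.
Qed.

Lemma nnv_sum (R : realType) n (P : nat -> 'cV[R]_n) N :
  (forall y, nnv (P y)) -> nnv (\sum_(0 <= y < N) P y).
Proof. by move=> h j; rewrite summxE; apply: sumr_ge0 => y _; exact: h. Qed.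

Lemma superadd_big (R : realType) m n (G : 'M[R]_(m, n)) F :
  (forall q : 'cV[R]_n, is_prob_vec q ->
     0 < l1 (G *m q) /\ (forall i, 0 <= (G *m q) i 0 / l1 (G *m q))) ->
  F_concave F ->
  forall (P : nat -> 'cV[R]_n) N t, (forall y, nnv (P y)) -> nnv t ->
  \sum_(0 <= y < N) gterm G F (P y) + gterm G F t
    <= gterm G F (\sum_(0 <= y < N) P y + t).
Proof.
move=> HG Fc P N; elim: N => [|N IH] t hP ht.
  by rewrite !big_geq // !add0r.
rewrite !big_nat_recr //= -addrA -[_ + P N + t]addrA.
apply: le_trans (IH _ hP _); last by move=> j; rewrite mxE addr_ge0 ?hP ?ht.
by rewrite lerD2l; apply: superadd.
Qed.

Lemma gterm_nb (R : realType) m n (G : 'M[R]_(m, n)) F :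
  (forall q : 'cV[R]_n, is_prob_vec q ->
     0 < l1 (G *m q) /\ (forall i, 0 <= (G *m q) i 0 / l1 (G *m q))) ->
  forall M, (forall s, is_prob s -> `|F s| <= M) -> forall u, nnv u ->
  `|gterm G F u| <= M * (\sum_i \sum_j `|G i j|) * tot u.
Proof.
move=> HG M HM u hu.
have [tu0|tu] := eqVneq (tot u) 0.
  by rewrite tu0 (tot0 hu tu0) gterm0 mulr0 normr0.
have tup : 0 < tot u by rewrite lt_neqAle eq_sym tu tot_ge0.
have [Lu Gu] := keyG HG hu tup.
have HMs := HM _ (prob_seqv Lu Gu).
have M0 : 0 <= M := le_trans (normr_ge0 _) HMs.
rewrite /gterm normrM (ger0_norm (ltW Lu)).
apply: le_trans (ler_wpM2l (ltW Lu) HMs) _.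
rewrite mulrC -mulrA ler_wpM2l //.
rewrite /l1 mulr_suml; apply: ler_sum => i _; rewrite mxE mulr_suml.
apply: le_trans (ler_norm_sum _ _ _) _; apply: ler_sum => j _.
rewrite normrM ler_wpM2l // ger0_norm ?hu //.
by rewrite /tot (bigD1 j) //= lerDl; apply: sumr_ge0 => k _; exact: hu.
Qed.

Lemma nd_series (R : realType) (u : R ^nat) : (forall n, 0 <= u n) ->
  nondecreasing_seq (series u).
Proof.
by move=> h a b ab; rewrite -subr_ge0 sub_series_geq //; apply: sumr_ge0.
Qed.

Lemma cvg_fsum (R : realType) (I : Type) (r : seq I) (f : I -> nat -> R)
  (l : I -> R) : (forall i, f i n @[n --> \oo] --> l i) ->
  (\sum_(i <- r) f i n) @[n --> \oo] --> \sum_(i <- r) l i.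
Proof.
move=> h; elim: r => [|i r IH].
  rewrite big_nil; under eq_cvg do rewrite big_nil; exact: cvg_cst.
rewrite big_cons; under eq_cvg do rewrite big_cons; exact: cvgD.
Qed.

Lemma mainlem (R : realType) m n (G : 'M[R]_(m, n)) F (p : 'I_n -> nat -> R) :
  (forall q : 'cV[R]_n, is_prob_vec q ->
     0 < l1 (G *m q) /\ (forall i, 0 <= (G *m q) i 0 / l1 (G *m q))) ->
  F_bounded F -> F_concave F -> (forall x y, 0 <= p x y) ->
  series (margY p) @ \oo --> (1 : R) ->
  cvgn (series (fun y => if 0 < margY p y then margY p y * gterm G F (condX p y) else 0))
  /\ limn (series (fun y => if 0 < margY p y then margY p y * gterm G F (condX p y) else 0))
     <= gterm G F (margX p).
Proof.
move=> HG [M HM] Fc Hp HY.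
set w := fun y => _.
have M0 : 0 <= M.
  apply: le_trans (normr_ge0 _) (HM [:: 1] _).
  split; first by move=> x; rewrite inE => /eqP ->.
  by rewrite big_cons big_nil addr0.
set C := \sum_i \sum_j `|G i j|.
have C0 : 0 <= C by apply: sumr_ge0 => i _; apply: sumr_ge0 => j _.
set K := M * C.
have K0 : 0 <= K by rewrite mulr_ge0.
have HY0 : forall y, 0 <= margY p y.
  by move=> y; apply: sumr_ge0 => x _; exact: Hp.
pose P := fun y => \col_x p x y : 'cV[R]_n.
have hP : forall y, nnv (P y) by move=> y j; rewrite mxE.
have totP : forall y, tot (P y) = margY p y.
  by move=> y; apply: eq_bigr => x _; rewrite mxE.
have wE : forall y, w y = gterm G F (P y).
  move=> y; rewrite /w; case: ifPn => [yp|yn].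
    have -> : P y = margY p y *: condX p y.
      by apply/matrixP => i j; rewrite (ord1 j) !mxE mulrC divfK // gt_eqF.
    by rewrite gtermZ.
  have y0 : margY p y = 0 by apply/eqP; rewrite eq_le HY0 andbT leNgt.
  by rewrite (tot0 (hP y)) ?totP // gterm0.
have nb : forall u, nnv u -> `|gterm G F u| <= K * tot u := gterm_nb HG HM.
have cY : cvgn (series (margY p)) := cvgP _ HY.
have cX : forall x, cvgn (series (p x)).
  move=> x; apply: (series_le_cvg (Hp x) HY0 _ cY) => y.
  by rewrite /margY (bigD1 x) //= lerDl; apply: sumr_ge0 => z _; exact: Hp.
pose t N := margX p - \sum_(0 <= y < N) P y.
have tE : forall N j, t N j 0 = limn (series (p j)) - series (p j) N.
  move=> N j; rewrite /t !mxE summxE.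
  congr (_ - _); rewrite /series /=; apply: eq_bigr => y _; by rewrite mxE.
have ht : forall N, nnv (t N).
  move=> N j; rewrite tE subr_ge0.
  exact: nondecreasing_cvgn_le (nd_series (Hp j)) (cX j) N.
have dec : forall N, margX p = \sum_(0 <= y < N) P y + t N.
  by move=> N; rewrite /t addrC subrK.
have ineq : forall N, series w N <=
   gterm G F (margX p) + K * \sum_j (limn (series (p j)) - series (p j) N).
  move=> N.
  have := @superadd_big _ _ _ G F HG Fc P N (t N) hP (ht N); rewrite -dec.
  have := nb _ (ht N); rewrite ler_norml => /andP [H2 _].
  have -> : \sum_j (limn (series (p j)) - series (p j) N) = tot (t N).
    by apply: eq_bigr => j _; rewrite tE.
  have -> : series w N = \sum_(0 <= y < N) gterm G F (P y).
    by rewrite /series /=; apply: eq_bigr => y _; exact: wE.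
  move=> H1; lra.
have cw : cvgn (series w).
  pose a := fun y => w y + K * margY p y.
  have ca : cvgn (series a).
    apply: (@series_le_cvg _ a ((K + K) *: margY p)).
    - move=> y; rewrite /a wE -(totP y) -lerBlDr sub0r.
      by have := nb _ (hP y); rewrite ler_norml => /andP [].
    - move=> y; rewrite [X in _ <= X](_ : _ = (K + K) * margY p y) //.
      by rewrite mulr_ge0 // addr_ge0.
    - move=> y; rewrite [X in _ <= X](_ : _ = (K + K) * margY p y) //.
      rewrite /a wE mulrDl lerD2r -(totP y).
      by have := nb _ (hP y); rewrite ler_norml => /andP [].
    - exact: is_cvg_seriesZ.
  have -> : w = a - K *: margY p.
    by apply: funext => y; rewrite /a /= addrK.
  by apply: is_cvg_seriesB => //; exact: is_cvg_seriesZ.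
split => //.
have ct : (\sum_j (limn (series (p j)) - series (p j) N)) @[N --> \oo] --> (0 : R).
  have := @cvg_fsum _ _ (index_enum 'I_n) (fun (j : 'I_n) N => limn (series (p j)) - series (p j) N) (fun j => limn (series (p j)) - limn (series (p j))).
  have e : \sum_(j < n) (limn (series (p j)) - limn (series (p j))) = 0.
    by rewrite big1 // => j _; rewrite subrr.
  rewrite e.
  apply => j.
  apply: cvgB; [exact: cvg_cst | exact: cX].
have H := ler_cvg_to cw (cvgD (cvg_cst (gterm G F (margX p))) (cvgMl_tmp (a:=K) ct)).
rewrite mulr0 addr0 in H; apply: H.
by apply: nearW => N; exact: ineq.
Qed.

Unset Implicit Arguments.

Theorem proposition3 (R : realType) (m n : nat) (G : 'M[R]_(m, n))
  (eta : R -> R) (F : seq R -> R) (p : 'I_n -> nat -> R) :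
  (forall q : 'cV[R]_n, is_prob_vec q ->
     0 < l1 (G *m q) /\ (forall i, 0 <= (G *m q) i 0 / l1 (G *m q))) ->
  gen_entropy eta F ->
  (forall x y, 0 <= p x y) ->
  series (margY p) @ \oo --> (1 : R) ->
  0 <= Hg eta F G p - Hg_cond eta F G p.
Proof.
move=> HG [Fb Fs Fe Hcase] Hp HY.
rewrite /Hg /Hg_cond subr_ge0.
case: Hcase => [[eta_up Fc] | [eta_dn Fv]].
  have [_ H] := mainlem HG Fb Fc Hp HY.
  exact: eta_up.
pose F' := fun s => - F s.
have Fb' : F_bounded F'.
  case: Fb => M HM; exists M => s hs; rewrite /F' normrN; exact: HM.
have Fc' : F_concave F'.
  move=> s t a hs ps pt ha; rewrite /F'.
  have := Fv s t a hs ps pt ha; lra.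
have [cw' H] := mainlem HG Fb' Fc' Hp HY.
have gE : forall q, gterm G F' q = - gterm G F q.
  by move=> q; rewrite /gterm /F' mulrN.
have wE : (fun y => if 0 < margY p y then margY p y * gterm G F' (condX p y) else 0)
  = - (fun y => if 0 < margY p y then margY p y * gterm G F (condX p y) else 0).
  apply: funext => y.
  have e : (if 0 < margY p y then margY p y * gterm G F' (condX p y) else 0) = - (if 0 < margY p y then margY p y * gterm G F (condX p y) else 0).
    by rewrite gE; case: ifP => _; rewrite ?mulrN ?oppr0.
  exact: e.
rewrite wE seriesN in cw' H.
rewrite is_cvgNE in cw'.
rewrite limN // gE lerN2 in H.
exact: eta_dn.
Qed.
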